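(* Let $\beta>0$, $\alpha=1/\beta$, $n\ge1$, and let $\sigma:\mathbb{R}\to\mathbb{R}$ be either ReLU, $\sigma(t)=\max(0,t)$, or LeakyReLU, $\sigma(t)=\max(kt,t)$ with fixed $k\in(0,1)$, applied coordinatewise to vectors. Let $\mathbf{x}^{n,\beta}\in\mathbb{H}^{n,\beta}$ and $\mathbf{x}^{n,\alpha}=p_{\mathbb{H}^{n,\beta}\to\mathbb{D}^{n,\alpha}}(\mathbf{x}^{n,\beta})$. Then the Lorentzian pointwise non-linearity and the M\''obius pointwise non-linearity are equivalent: $$p_{\mathbb{H}^{n,\beta}\to\mathbb{D}^{n,\alpha}}\big(\sigma^{\otimes^\beta}(\mathbf{x}^{n,\beta})\big)=\sigma^{\otimes^\alpha}(\mathbf{x}^{n,\alpha}).$$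
   Context: Lorentzian scalar product on $\mathbb{R}^{n+1}$: $\langle \mathbf{x},\mathbf{y}\rangle_{\mathcal{L}}=-x_0y_0+\sum_{i=1}^n x_iy_i$, $\|\mathbf{v}\|_{\mathcal{L}}=\sqrt{\langle\mathbf{v},\mathbf{v}\rangle_{\mathcal{L}}}$. Hyperboloid model $\mathbb{H}^{n,\beta}=\{\mathbf{x}\in\mathbb{R}^{n+1}:\langle\mathbf{x},\mathbf{x}\rangle_{\mathcal{L}}=-\beta,\ x_0>0\}$ with origin $\mathbf{0}=(\sqrt{\beta},0,\dots,0)$; tangent space at origin $\{\mathbf{v}\in\mathbb{R}^{n+1}:v_0=0\}$. Distance $d^\beta_{\mathbb{H}}(\mathbf{x},\mathbf{y})=\sqrt{\beta}\,\mathrm{arcosh}(-\langle\mathbf{x},\mathbf{y}\rangle_{\mathcal{L}}/\beta)$. Exponential map at origin: $\exp^\beta_{\mathbf{0}}(\mathbf{v})=\cosh(\|\mathbf{v}\|_{\mathcal{L}}/\sqrt{\beta})\mathbf{0}+\sqrt{\beta}\sinh(\|\mathbf{v}\|_{\mathcal{L}}/\sqrt{\beta})\mathbf{v}/\|\mathbf{v}\|_{\mathcal{L}}$ for $\mathbf{v}\ne0$, $\exp^\beta_{\mathbf{0}}(0)=\mathbf{0}$. Logarithmic map at origin: $\log^\beta_{\mathbf{0}}(\mathbf{y})=d^\beta_{\mathbb{H}}(\mathbf{0},\mathbf{y})\frac{\mathbf{y}+\frac1\beta\langle\mathbf{0},\mathbf{y}\rangle_{\mathcal{L}}\mathbf{0}}{\|\mathbf{y}+\frac1\beta\langle\mathbf{0},\mathbf{y}\rangle_{\mathcal{L}}\mathbf{0}\|_{\mathcal{L}}}$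 for $\mathbf{y}\ne\mathbf{0}$, $\log^\beta_{\mathbf{0}}(\mathbf{0})=0$. Lorentzian pointwise non-linearity: writing $\log^\beta_{\mathbf{0}}(\mathbf{x})=(v_0,\dots,v_n)$, $\sigma^{\otimes^\beta}(\mathbf{x})=\exp^\beta_{\mathbf{0}}\big((0,\sigma(v_1),\dots,\sigma(v_n))\big)$. Poincar\'e ball $\mathbb{D}^{n,\alpha}=\{\mathbf{x}\in\mathbb{R}^n:\alpha\|\mathbf{x}\|^2<1\}$ with $\exp^\alpha_{\mathbf{0}}(\mathbf{v})=\tanh(\sqrt{\alpha}\|\mathbf{v}\|)\frac{\mathbf{v}}{\sqrt{\alpha}\|\mathbf{v}\|}$ and $\log^\alpha_{\mathbf{0}}(\mathbf{y})=\tanh^{-1}(\sqrt{\alpha}\|\mathbf{y}\|)\frac{\mathbf{y}}{\sqrt{\alpha}\|\mathbf{y}\|}$ for nonzero arguments, both mapping $0$ to $0$. M\''obius pointwise non-linearity: $\sigma^{\otimes^\alpha}(\mathbf{x})=\exp^\alpha_{\mathbf{0}}(\sigma(\log^\alpha_{\mathbf{0}}(\mathbf{x})))$. Isometry $p_{\mathbb{H}^{n,\beta}\to\mathbb{D}^{n,\alpha}}(x_0,x_1,\dots,x_n)=\frac{\sqrt{\beta}(x_1,\dots,x_n)}{\sqrt{\beta}+x_0}$. *)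

(* Defs.v *)
From Stdlib Require Import Reals Lra ClassicalDescription.
Open Scope R_scope.

(* Vectors in R^(n+1) (hyperboloid side) are functions nat -> R, only the
   coordinates 0..n matter.  Vectors in R^n (Poincare side) are functions
   nat -> R, only coordinates 0..n-1 matter. *)

Fixpoint sum1 (m : nat) (f : nat -> R) : R :=
  match m with O => 0 | S k => sum1 k f + f (S k) end.

Fixpoint sum0 (m : nat) (f : nat -> R) : R :=
  match m with O => 0 | S k => sum0 k f + f k end.

Definition arcosh (x : R) : R := ln (x + sqrt (x ^ 2 - 1)).
Definition artanh (x : R) : R := / 2 * ln ((1 + x) / (1 - x)).

Definition lor (n : nat) (x y : nat -> R) : R := - (x 0%nat * y 0%nat) + sum1 n (fun i => x i * y i).
Definition lnorm (n : nat) (v : nat -> R) : R := sqrt (lor n v v).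

Definition in_H (n : nat) (beta : R) (x : nat -> R) : Prop :=
  lor n x x = - beta /\ 0 < x 0%nat.

Definition originH (beta : R) : nat -> R :=
  fun i => if Nat.eqb i 0 then sqrt beta else 0.

Definition veqH (n : nat) (x y : nat -> R) : Prop := forall i, (i <= n)%nat -> x i = y i.
Definition veqD (n : nat) (x y : nat -> R) : Prop := forall i, (i < n)%nat -> x i = y i.

Definition zeroV : nat -> R := fun _ => 0.

Definition distH (n : nat) (beta : R) (x y : nat -> R) : R :=
  sqrt beta * arcosh (- lor n x y / beta).

Definition expH (n : nat) (beta : R) (v : nat -> R) : nat -> R :=
  if excluded_middle_informative (veqH n v zeroV) then originH beta
  else fun i => cosh (lnorm n v / sqrt beta) * originH beta i
               + sqrt beta * sinh (lnorm n v / sqrt beta) * v i / lnorm n v.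

Definition logH (n : nat) (beta : R) (y : nat -> R) : nat -> R :=
  if excluded_middle_informative (veqH n y (originH beta)) then zeroV
  else let w := fun i => y i + / beta * lor n (originH beta) y * originH beta i in
       fun i => distH n beta (originH beta) y * w i / lnorm n w.

Definition lorentz_nl (n : nat) (beta : R) (sigma : R -> R) (x : nat -> R) : nat -> R :=
  let v := logH n beta x in
  expH n beta (fun i => if Nat.eqb i 0 then 0 else sigma (v i)).

Definition enorm (n : nat) (v : nat -> R) : R := sqrt (sum0 n (fun i => v i ^ 2)).

Definition expD (n : nat) (alpha : R) (v : nat -> R) : nat -> R :=
  if excluded_middle_informative (veqD n v zeroV) then zeroV
  else fun i => tanh (sqrt alpha * enorm n v) * v i / (sqrt alpha * enorm n v).

Definition logD (n : nat) (alpha : R) (y : nat -> R) : nat -> R :=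
  if excluded_middle_informative (veqD n y zeroV) then zeroV
  else fun i => artanh (sqrt alpha * enorm n y) * y i / (sqrt alpha * enorm n y).

Definition mobius_nl (n : nat) (alpha : R) (sigma : R -> R) (x : nat -> R) : nat -> R :=
  let v := logD n alpha x in expD n alpha (fun i => sigma (v i)).

(* isometry p : H^{n,beta} -> D^{n,alpha}; output coordinate i is input coordinate i+1 *)
Definition pHD (beta : R) (x : nat -> R) : nat -> R :=
  fun i => sqrt beta * x (S i) / (sqrt beta + x 0%nat).

Definition relu (t : R) : R := Rmax 0 t.
Definition leaky_relu (k : R) (t : R) : R := Rmax (k * t) t.

(* Main.v *)
Require Import Defs.
From Stdlib Require Import Reals Lra Lia FunctionalExtensionality ClassicalDescription.
Open Scope R_scope.

Lemma sum1_ext n f g : (forall i, (1 <= i <= n)%nat -> f i = g i) -> sum1 n f = sum1 n g.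
Proof.
  induction n as [|n IH]; intros H; simpl; [reflexivity|].
  rewrite IH by (intros; apply H; lia). rewrite (H (S n)) by lia. reflexivity.
Qed.

Lemma sum1_scal n c f : sum1 n (fun i => c * f i) = c * sum1 n f.
Proof. induction n as [|n IH]; simpl; [ring| rewrite IH; ring]. Qed.

Lemma sum1_const0 n : sum1 n (fun _ => 0) = 0.
Proof. induction n as [|n IH]; simpl; [reflexivity| rewrite IH; ring]. Qed.

Lemma sum1_sq_nonneg n f : 0 <= sum1 n (fun i => f i * f i).
Proof. induction n as [|n IH]; simpl; [lra|]. pose proof (Rle_0_sqr (f (S n))). unfold Rsqr in *. lra. Qed.

Lemma sum1_sq_zero n f : sum1 n (fun i => f i * f i) = 0 -> forall i, (1 <= i <= n)%nat -> f i = 0.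
Proof.
  induction n as [|n IH]; intros H i Hi; [lia|]. simpl in H.
  pose proof (sum1_sq_nonneg n f). pose proof (Rle_0_sqr (f (S n))). unfold Rsqr in *.
  assert (A: sum1 n (fun i => f i * f i) = 0) by lra.
  assert (B: f (S n) * f (S n) = 0) by lra.
  destruct (Nat.eq_dec i (S n)) as [->|ne].
  - destruct (Rmult_integral _ _ B); auto.
  - apply IH; auto; lia.
Qed.

Lemma sum0_shift n f : sum0 n (fun i => f (S i)) = sum1 n f.
Proof. induction n as [|n IH]; simpl; [reflexivity| rewrite IH; reflexivity]. Qed.

Lemma sqrt_eq E v : 0 <= v -> v * v = E -> sqrt E = v.
Proof. intros H1 H2; subst; apply sqrt_square; auto. Qed.

Lemma tanh_half y : sinh (2*y) / (1 + cosh (2*y)) = tanh y.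
Proof.
  unfold tanh, sinh, cosh.
  replace (2*y) with (y+y) by ring. rewrite exp_plus.
  replace (-(y+y)) with (-y + -y) by ring. rewrite exp_plus, exp_Ropp.
  pose proof (exp_pos y). set (e := exp y) in *.
  assert (0 < /e) by (apply Rinv_0_lt_compat; auto).
  field. assert (0 < e*e) by nra. repeat split; nra.
Qed.

Lemma sig_hom sigma : (sigma = relu \/ exists k, 0<k<1 /\ sigma = leaky_relu k) ->
  forall c t, 0 <= c -> sigma (c*t) = c * sigma t.
Proof.
  intros [->|[k [Hk ->]]] c t Hc; unfold relu, leaky_relu, Rmax;
  repeat destruct Rle_dec; nra.
Qed.

Lemma div_eq a c d e : c <> 0 -> e <> 0 -> a * e = d * c -> a / c = d / e.
Proof. intros Hc He H. replace (a/c) with (a*e/(c*e)) by (field; auto). rewrite H. field. auto. Qed.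
Theorem theorem3p3 (beta : R) (n : nat) (sigma : R -> R) (x : nat -> R) :
  0 < beta ->
  (1 <= n)%nat ->
  (sigma = relu \/ exists k : R, 0 < k < 1 /\ sigma = leaky_relu k) ->
  in_H n beta x ->
  veqD n (pHD beta (lorentz_nl n beta sigma x))
         (mobius_nl n (/ beta) sigma (pHD beta x)).
Proof.
  intros Hbeta Hn Hs [Hlor Hx0] i Hi.
  pose proof (sig_hom _ Hs) as Hom.
  assert (sig0 : sigma 0 = 0) by (rewrite <- (Rmult_0_l 0) at 1; rewrite Hom; lra).
  destruct (ex_intro (fun b => 0 < b /\ beta = b*b) (sqrt beta)
     (conj (sqrt_lt_R0 _ Hbeta) (eq_sym (sqrt_sqrt _ (Rlt_le _ _ Hbeta))))) as [b [Hb ->]].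
  assert (Hsb : sqrt (b*b) = b) by (apply sqrt_square; lra).
  assert (Hsib : sqrt (/ (b*b)) = / b).
  { apply sqrt_eq. apply Rlt_le, Rinv_0_lt_compat; lra. field; lra. }
  unfold pHD, mobius_nl, lorentz_nl. rewrite Hsb.
  set (R2 := sum1 n (fun j => x j * x j)) in *.
  assert (HR2 : 0 <= R2) by apply sum1_sq_nonneg.
  unfold lor in Hlor. fold R2 in Hlor.
  destruct (Rle_lt_or_eq_dec _ _ HR2) as [R2pos | R2z].
  2:{
    assert (xz : forall j, (1 <= j <= n)%nat -> x j = 0) by (apply sum1_sq_zero; auto).
    assert (x0b : x 0%nat = b) by nra.
    unfold logH. destruct excluded_middle_informative as [_|hn].
    2:{ exfalso; apply hn. intros j Hj. unfold originH. destruct j; simpl.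
        rewrite Hsb; auto. apply xz; lia. }
    unfold expH. destruct excluded_middle_informative as [_|hn].
    2:{ exfalso; apply hn. intros j Hj. unfold zeroV. destruct (Nat.eqb j 0); auto. }
    unfold logD. destruct excluded_middle_informative as [_|hn].
    2:{ exfalso; apply hn. intros j Hj. unfold zeroV. rewrite xz by lia. unfold Rdiv; ring. }
    unfold expD. destruct excluded_middle_informative as [_|hn].
    2:{ exfalso; apply hn. intros j Hj. unfold zeroV. auto. }
    unfold originH, zeroV; simpl. unfold Rdiv; ring. }
  set (r := sqrt R2).
  assert (Hr : 0 < r) by (apply sqrt_lt_R0; auto).
  assert (Hrr : r * r = R2) by (apply sqrt_sqrt; lra).
  set (x0 := x 0%nat) in *.
  assert (Hx0b : b < x0) by nra.
  assert (Hx0r : r < x0) by nra.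
  set (q := (x0 + r) / b).
  assert (Hq : 1 < q) by (unfold q; apply (Rmult_lt_reg_r b); [lra|]; field_simplify; lra).
  assert (Hlq : 0 < ln q) by (rewrite <- ln_1; apply ln_increasing; lra).
  set (c := b * ln q / r).
  assert (Hc : 0 < c) by (unfold c; apply Rdiv_lt_0_compat; nra).
  assert (Hlo : lor n (originH (b*b)) x = - (b * x0)).
  { unfold lor. rewrite (sum1_ext _ _ (fun _ => 0)).
    rewrite sum1_const0. unfold originH; simpl. rewrite Hsb. fold x0. ring.
    intros j Hj. unfold originH. destruct j; [lia|]. simpl. ring. }
  assert (HlogH : forall j, j <> 0%nat -> logH n (b*b) x j = c * x j).
  { intros j Hj. unfold logH. destruct excluded_middle_informative as [hv|_].
    { exfalso. assert (R2 = 0); [|lra]. unfold R2.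
      rewrite (sum1_ext _ _ (fun _ => 0)). apply sum1_const0.
      intros k Hk. rewrite (hv k) by lia. unfold originH. destruct k; [lia|]. simpl. ring. }
    cbv zeta. rewrite Hlo.
    assert (Hln : lnorm n (fun i => x i + / (b*b) * - (b * x0) * originH (b*b) i) = r).
    { unfold lnorm, lor. unfold originH at 1 2. simpl. rewrite Hsb.
      rewrite (sum1_ext _ _ (fun j => x j * x j)). fold R2.
      replace (x 0%nat + / (b * b) * - (b * x0) * b) with 0 by (unfold x0; field; lra).
      unfold r. f_equal. lra.
      intros k Hk. unfold originH. destruct k; [lia|]. simpl. ring. }
    rewrite Hln. unfold distH, arcosh. rewrite Hlo, Hsb.
    assert (Hsq : sqrt ((- - (b * x0) / (b * b)) ^ 2 - 1) = r / b).
    { apply sqrt_eq. apply Rlt_le, Rdiv_lt_0_compat; lra.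
      replace ((- - (b*x0)/(b*b))^2 - 1) with ((x0*x0 - b*b)/(b*b)) by (field; lra). replace (x0*x0 - b*b) with (r*r) by lra. field. lra. }
    rewrite Hsq. unfold originH. destruct j; [lia|]. simpl.
    replace (- - (b * x0) / (b * b) + r / b) with q by (unfold q; field; lra).
    unfold c. field. lra. }
  assert (HV : (fun i0 => if i0 =? 0 then 0 else sigma (logH n (b * b) x i0))
             = (fun j => if j =? 0 then 0 else c * sigma (x j))).
  { apply functional_extensionality; intro j; destruct j; simpl; [reflexivity|].
    rewrite HlogH by lia. apply Hom; lra. }
  rewrite HV.
  assert (Hey : enorm n (fun i1 => b * x (S i1) / (b + x0)) = b * r / (b + x0)).
  { unfold enorm.
    change (sqrt (sum0 n (fun i => (fun k => (b * x k / (b + x0)) ^ 2) (S i))) = b * r / (b + x0)).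
    rewrite sum0_shift.
    rewrite (sum1_ext _ _ (fun k => (b/(b+x0))^2 * (x k * x k))).
    2:{ intros; field; lra. }
    rewrite sum1_scal. fold R2. apply sqrt_eq.
    apply Rlt_le, Rdiv_lt_0_compat; nra. rewrite <- Hrr. field. lra. }
  assert (Hart : artanh (/ b * (b * r / (b + x0))) = ln q / 2).
  { unfold artanh. replace ((1 + / b * (b * r / (b + x0))) / (1 - / b * (b * r / (b + x0))))
      with ((b + x0 + r) / (b + x0 - r)) by (field; split; lra).
    replace ((b + x0 + r) / (b + x0 - r)) with q. field.
    unfold q. apply div_eq; try lra. }
  set (c2 := ln q / 2 * b / r).
  assert (Hc2 : 0 < c2) by (unfold c2; apply Rdiv_lt_0_compat; nra).
  assert (HU : (fun i0 => sigma (logD n (/ (b * b)) (fun i1 => b * x (S i1) / (b + x0)) i0))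
             = (fun j => c2 * sigma (x (S j)))).
  { unfold logD. destruct excluded_middle_informative as [hv|_].
    { exfalso. assert (R2 = 0); [|lra]. unfold R2.
      rewrite (sum1_ext _ _ (fun _ => 0)). apply sum1_const0.
      intros k Hk. destruct k; [lia|].
      assert (E := hv k ltac:(lia)). unfold zeroV in E.
      assert (x (S k) = (b * x (S k) / (b + x0)) * (b + x0) / b) by (field; lra).
      rewrite H, E. unfold Rdiv; ring. }
    apply functional_extensionality; intro j. rewrite Hsib, Hey, Hart.
    rewrite <- Hom by lra. f_equal. unfold c2. field. repeat split; lra. }
  rewrite HU.
  set (S2 := sum1 n (fun j => sigma (x j) * sigma (x j))).
  assert (HS2 : 0 <= S2) by apply sum1_sq_nonneg.
  destruct (Rle_lt_or_eq_dec _ _ HS2) as [S2pos | S2z].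
  2:{
    assert (sz : forall j, (1 <= j <= n)%nat -> sigma (x j) = 0) by (apply sum1_sq_zero; auto).
    unfold expH. destruct excluded_middle_informative as [_|hn].
    2:{ exfalso; apply hn. intros j Hj. unfold zeroV. destruct j; simpl; [reflexivity|].
        rewrite sz by lia. ring. }
    unfold expD. destruct excluded_middle_informative as [_|hn].
    2:{ exfalso; apply hn. intros j Hj. unfold zeroV. rewrite sz by lia. ring. }
    unfold originH, zeroV; simpl. unfold Rdiv; ring. }
  set (s := sqrt S2).
  assert (Hsp : 0 < s) by (apply sqrt_lt_R0; auto).
  assert (Hss : s * s = S2) by (apply sqrt_sqrt; lra).
  assert (HL : lnorm n (fun j => if j =? 0 then 0 else c * sigma (x j)) = c * s).
  { unfold lnorm, lor. simpl.
    rewrite (sum1_ext _ _ (fun k => c * c * (sigma (x k) * sigma (x k)))).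
    2:{ intros k Hk; destruct k; [lia|]; simpl; ring. }
    rewrite sum1_scal. fold S2. apply sqrt_eq. nra. rewrite <- Hss. ring. }
  assert (HeU : enorm n (fun j => c2 * sigma (x (S j))) = c2 * s).
  { unfold enorm.
    change (sqrt (sum0 n (fun i => (fun k => (c2 * sigma (x k)) ^ 2) (S i))) = c2 * s).
    rewrite sum0_shift.
    rewrite (sum1_ext _ _ (fun k => c2 * c2 * (sigma (x k) * sigma (x k)))).
    2:{ intros; ring. }
    rewrite sum1_scal. fold S2. apply sqrt_eq. nra. rewrite <- Hss. ring. }
  unfold expH. destruct excluded_middle_informative as [hv|_].
  { exfalso. assert (S2 = 0); [|lra]. unfold S2.
    rewrite (sum1_ext _ _ (fun _ => 0)). apply sum1_const0.
    intros k Hk. destruct k; [lia|].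
    assert (E := hv (S k) ltac:(lia)). unfold zeroV in E. simpl in E.
    assert (sigma (x (S k)) = 0) by (apply (Rmult_eq_reg_l c); [rewrite E; ring| lra]).
    rewrite H. ring. }
  unfold expD. destruct excluded_middle_informative as [hv|_].
  { exfalso. assert (S2 = 0); [|lra]. unfold S2.
    rewrite (sum1_ext _ _ (fun _ => 0)). apply sum1_const0.
    intros k Hk. destruct k; [lia|].
    assert (E := hv k ltac:(lia)). unfold zeroV in E.
    assert (sigma (x (S k)) = 0) by (apply (Rmult_eq_reg_l c2); [rewrite E; ring| lra]).
    rewrite H. ring. }
  rewrite HL, HeU, Hsib. unfold originH. simpl. rewrite Hsb.
  replace (c * s / b) with (2 * (/ b * (c2 * s))) by (unfold c, c2; field; lra).
  rewrite <- tanh_half.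
  assert (0 < cosh (2 * (/ b * (c2 * s)))) by (unfold cosh; pose proof (exp_pos (2 * (/ b * (c2 * s)))); pose proof (exp_pos (- (2 * (/ b * (c2 * s))))); lra).
  assert (0 < b * (c * s)) by (apply Rmult_lt_0_compat; nra). field. repeat split; try lra. nra.
Qed.
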